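(* Let $p$ be a prime and $a,b,c\ge0$ integers with $a,b\le p-1$ and $c\le a+b$. Then every root of $f(a,b,c)$ in $\overline{\mathbb{F}}_p\setminus\{0,1\}$ is a simple root.
   Context: For non-negative integers $a,b,c$, $f(a,b,c)\in\overline{\mathbb{F}}_p[t]$ is $f(a,b,c)=\sum_{i_2+i_3=c}\binom{a}{i_2}\binom{b}{i_3}t^{i_2}$ (binomial coefficients reduced mod $p$, $\binom{n}{i}=0$ for $i<0$ or $i>n$). *)

(* Defs.v *)
From HB Require Import structures.
From mathcomp Require Import all_boot all_order all_algebra.
Set Implicit Arguments. Unset Strict Implicit. Unset Printing Implicit Defensive.
Import GRing.Theory.
Local Open Scope ring_scope.

(* Indexing by i2 in [0,c], i3 = c - i2; 'C(n,i) = 0 for i > n. *)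
Definition fpoly (K : nzRingType) (a b c : nat) : {poly K} :=
  \sum_(i2 < c.+1) ('C(a, i2) * 'C(b, c - i2))%:R *: 'X^i2.

Definition simple_root (K : idomainType) (q : {poly K}) (x : K) : bool :=
  root q x && ~~ (('X - x%:P) ^+ 2 %| q).

(* Main.v *)
Require Import Defs.
From HB Require Import structures.
From mathcomp Require Import all_boot all_order all_algebra.
From mathcomp Require Import ring zify.
Import GRing.Theory.
Local Open Scope ring_scope.

Lemma coef_fpoly (K : nzRingType) a b c i :
  (fpoly K a b c)`_i = if (i <= c)%N then ('C(a, i) * 'C(b, c - i))%:R else 0.
Proof.
rewrite /fpoly coef_sumMXn.
case: leqP => hi.
  rewrite (bigD1 (Ordinal (hi : (i < c.+1)%N))) //= big1 ?addr0 //.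
  move=> j /andP[/eqP ej hj]; case/eqP: hj; apply: val_inj; exact: ej.
by rewrite big1 // => j /eqP ej; move: (ltn_ord j); rewrite ej ltnS leqNgt hi.
Qed.

Lemma binK (K : nzRingType) n m :
  m.+1%:R * 'C(n, m.+1)%:R = (n%:R - m%:R) * 'C(n, m)%:R :> K.
Proof.
case: (leqP m n) => h.
  by rewrite -natrB // -!natrM mul_bin_left.
by rewrite !bin_small ?mulr0 // ltnW.
Qed.

Lemma rec_fpoly (K : comNzRingType) a b c i :
  let u := fun k => (fpoly K a b c)`_k in
  i.+1%:R * ((i + b + 1)%:R - c%:R) * u i.+1 = (i%:R - a%:R) * (i%:R - c%:R) * u i.
Proof.
move=> u; rewrite /u !coef_fpoly.
case: (ltngtP i c) => h.
- have [j ->] : exists j, c = (i.+1 + j)%N by exists (c - i.+1)%N; rewrite subnKC.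
  rewrite (_ : (i.+1 + j - i = j.+1)%N); last by rewrite addSn subSn ?leq_addr // addKn.
  rewrite (_ : (i.+1 + j - i.+1 = j)%N); last by rewrite addKn.
  have hA := binK K a i; have hB := binK K b j.
  rewrite !natrM.
  transitivity ((i.+1%:R * 'C(a, i.+1)%:R) * ((b%:R - j%:R) * 'C(b, j)%:R) : K).
    rewrite !natrD /=; ring.
  rewrite hA -hB !natrD; ring.
- by rewrite !mulr0.
- by rewrite h subrr !(mulr0, mul0r).
Qed.

Definition Lop {K : comNzRingType} (a b c : nat) (F : {poly K}) : {poly K} :=
  'X * F^`()^`() - 'X * ('X * F^`()^`()) + ((b + 1)%:R - c%:R : K) *: F^`()
  - (1 - a%:R - c%:R : K) *: ('X * F^`()) - ((a * c)%:R : K) *: F.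

Lemma ode_fpoly (K : comNzRingType) a b c : Lop a b c (fpoly K a b c) = 0.
Proof.
apply/polyP => i; rewrite coef0 /Lop.
have := rec_fpoly K a b c; move: (fpoly K a b c) => F /= rec.
rewrite !(coefB, coefD, coefZ, coefXM, coef_deriv).
case: i => [|k] /=.
  move/eqP: (rec 0); rewrite -subr_eq0 => /eqP {}rec.
  rewrite -[RHS]rec !natrD !natrM.
  ring.
case: k => [|k] /=.
  move/eqP: (rec 1%N); rewrite -subr_eq0 => /eqP {}rec.
  rewrite -[RHS]rec !natrD !natrM; ring.
move/eqP: (rec k.+2); rewrite -subr_eq0 => /eqP {}rec.
rewrite -[RHS]rec !natrD !natrM; ring.
Qed.

Lemma prime_dvd_fact p n : prime p -> (p %| n`!)%N -> (p <= n)%N.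
Proof.
move=> pp; elim: n => [|n IH]; first by rewrite fact0 dvdn1 => /eqP p1; rewrite p1 in pp.
rewrite factS Euclid_dvdM // => /orP[/dvdn_leq -> //|/IH h]; exact: leq_trans h (leqnSn n).
Qed.

Lemma Lop_factor (K : comNzRingType) a b c (G : {poly K}) x k :
  let Y := 'X - x%:P in
  Lop a b c (G * Y ^+ k.+2) = Y ^+ k *
   (('X - 'X * 'X) * (G^`()^`() * Y * Y + G^`() * Y *+ (2 * k.+2) + G *+ (k.+2 * k.+1))
    + ((b + 1)%:R - c%:R : K) *: (Y * (G^`() * Y + G *+ k.+2))
    - (1 - a%:R - c%:R : K) *: ('X * (Y * (G^`() * Y + G *+ k.+2)))
    - ((a * c)%:R : K) *: (G * Y * Y)).
Proof.
move=> Y.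
have d1 : (Y^+k.+2)^`() = Y^+k.+1 *+ k.+2 by rewrite deriv_exp derivXsubC mul1r.
have d2 : (Y^+k.+1)^`() = Y^+k *+ k.+1 by rewrite deriv_exp derivXsubC mul1r.
have eP : Y^+k.+2 = Y^+k * Y * Y by rewrite -!exprSr.
have eQ : Y^+k.+1 = Y^+k * Y by rewrite -!exprSr.
rewrite /Lop; move: d1 d2 eP eQ; move: (Y^+k.+2) (Y^+k.+1) (Y^+k) => P Q Z d1 d2 eP eQ.
have dF : (G * P)^`() = G^`() * P + G * (Q *+ k.+2) by rewrite derivM d1.
rewrite dF derivD derivM derivM derivMn d1 d2 eP eQ -!mul_polyC.
ring.
Qed.

Lemma ndvd_bin p n m : prime p -> (n < p)%N -> (m <= n)%N -> ~~ (p %| 'C(n, m))%N.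
Proof.
move=> pp np mn; apply/negP => /(dvdn_mulr (m`! * (n - m)`!)).
rewrite bin_fact // => /(@prime_dvd_fact p n pp); by rewrite leqNgt np.
Qed.

Theorem propositionA6 (p : nat) (K : closedFieldType) (a b c : nat) :
  prime p -> p \in [pchar K] ->
  (a <= p.-1)%N -> (b <= p.-1)%N -> (c <= a + b)%N ->
  forall x : K, x != 0 -> x != 1 -> root (fpoly K a b c) x ->
    simple_root (fpoly K a b c) x.
Proof.
move=> pp pK ha hb hc x x0 x1 rootF.
have p0 : (0 < p)%N by apply: prime_gt0.
have hap : (a < p)%N by rewrite (leq_ltn_trans ha) // prednK.
have hbp : (b < p)%N by rewrite (leq_ltn_trans hb) // prednK.
have ode := ode_fpoly K a b c.
move: ode rootF.
have Fn0 : fpoly K a b c != 0.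
  apply/eqP => F0.
  have := congr1 (fun q : {poly K} => q`_(minn c a)) F0.
  rewrite /= coef_fpoly geq_minl coef0 => /eqP; rewrite -(dvdn_pcharf pK).
  rewrite Euclid_dvdM // => /orP[].
    by apply/negP; apply: ndvd_bin => //; rewrite geq_minr.
  apply/negP; apply: ndvd_bin => //.
  case: (leqP c a) => h.
    by rewrite subnn.
  by rewrite leq_subLR.
have sF : (size (fpoly K a b c) <= a.+1)%N.
  apply/leq_sizeP => j hj; rewrite coef_fpoly bin_small ?mul0n; first by case: ifP.
  by [].
move: Fn0 sF; set F := fpoly K a b c => Fn0 sF ode rootF.
rewrite /simple_root rootF /=; apply/negP; rewrite dvdp_eq => /eqP eF.
set Y := 'X - x%:P.
move: eF; set H := F %/ _ => eF.
have Hn0 : H != 0 by apply: contraNneq Fn0 => H0; rewrite eF H0 mul0r.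
case: (multiplicity_XsubC H x) => k [G]; rewrite Hn0 /= => rG eH.
have eFG : F = G * Y ^+ k.+2 by rewrite eF eH -mulrA -exprD addn2.
have Gn0 : G != 0 by apply: contraNneq Fn0 => G0; rewrite eFG G0 mul0r.
have Yn0 : Y != 0 by rewrite polyXsubC_eq0.
have hk : (k.+2 < p)%N.
  have : (size F = size G + k.+2)%N.
    rewrite eFG size_mul ?expf_neq0 // size_exp_XsubC; by rewrite addnS.
  move=> sz; rewrite sz in sF.
  have : (0 < size G)%N by rewrite size_poly_gt0.
  move=> sG; lia.
move: ode; rewrite eFG Lop_factor => /eqP; rewrite mulf_eq0 expf_eq0 (negPf Yn0) andbF /=.
move e2: (k.+2 * k.+1)%N => n2; move: (2 * k.+2)%N k.+2 => n1 n3.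
move=> /eqP/(congr1 (fun q => q.[x])); rewrite !(hornerD, hornerN, hornerM, hornerMn, hornerZ, hornerXsubC, hornerX, horner0, hornerC) subrr => h.
have : (x * (1 - x)) * (G.[x] * n2%:R) = 0 by rewrite -h; ring.
apply/eqP; rewrite !mulf_neq0 //; first by rewrite subr_eq0 eq_sym.
rewrite -e2 -(dvdn_pcharf pK) Euclid_dvdM //; apply/negP => /orP[] /dvdn_leq; lia.
Qed.
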